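(* For every fixed integer $r\ge1$, there is a function $\varepsilon(k)\to0$ as $k\to\infty$ such that for every $k$ and every family $F$ of functions from a set $X$ to $\{0,1,\dots,k-1\}$, \[\mathrm{opt}_{\mathrm{amb},r}(F)\le(1+\varepsilon(k))\,\mathrm{opt}_{\mathrm{std}}(F)\,k^r\ln k.\]
   Context: Let $F$ be a family of functions from $X$ to $Y$. In online learning an adversary secretly fixes $f\in F$ and presents inputs; the learner guesses values of $f$. In the standard model each input is presented singly and after the guess the true value is revealed; $\mathrm{opt}_{\mathrm{std}}(F)$ is the maximum number of incorrect guesses under optimal play by both sides. In the $r$-delayed ambiguous reinforcement model, each round $i$ consists of $r$ inputs $x_{i,1},\dots,x_{i,r}$ given one at a time: the learner must guess $f(x_{i,j})$ before receiving $x_{i,j+1}$; after all $r$ guesses the adversary says YES if all $r$ guesses were correct and NO otherwise. A mistake is a round with answer NO. $\mathrm{opt}_{\mathrm{amb},r}(F)$ is the maximum number of mistakes under optimal play by both learner and adversary (answers consistent with some $f\in F$). *)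

(* Defs.v *)
From mathcomp Require Import all_boot.


Set Implicit Arguments.
Unset Strict Implicit.
Unset Printing Implicit Defensive.

Definition fun_family (X : Type) (Y : Type) := (X -> Y) -> Prop.

(* Standard model.  [std_force V m] : in the game where the current      *)
(* version space (set of functions consistent with all revealed values) *)
(* is V, the adversary has a strategy forcing at least m further        *)
(* mistakes against every learner.  Each step: the adversary presents   *)
(* x, the learner guesses y, the adversary reveals a true value v which *)
(* must be consistent with some function of V; it is a mistake iff      *)
(* v <> y.  The inductive (least fixed point) reading means the m       *)
(* mistakes are forced within finitely many rounds.                     *)
Inductive std_force {X : Type} {Y : eqType} : fun_family X Y -> nat -> Prop :=
| std_force0 (V : fun_family X Y) : std_force V 0
| std_force_step (V : fun_family X Y) (m : nat) :
    (exists x : X, forall y : Y, exists v : Y,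
        (exists f, V f /\ f x = v) /\
        std_force (fun f => V f /\ f x = v) (if v == y then m else m.-1)) ->
    std_force V m.

Definition opt_std {X : Type} {Y : eqType} (F : fun_family X Y) (n : nat) : Prop :=
  std_force F n /\ forall m, std_force F m -> m <= n.

(* [acc] is the list of (input, guess) pairs of the current round so    *)
(* far.  Within a round, while fewer than r inputs were given, the      *)
(* adversary picks the next input (depending on everything so far) and *)
(* the learner guesses.  After r guesses the adversary answers YES (all *)
(* guesses correct) or NO; the answer must be consistent with some f in *)
(* the current version space, which is then restricted accordingly.    *)
(* A NO round is a mistake.                                             *)
Definition all_correct {X : Type} {Y : eqType} (f : X -> Y) (acc : seq (X * Y)) : bool :=
  all (fun p => f p.1 == p.2) acc.

Inductive amb_force {X : Type} {Y : eqType} (r : nat) :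
    fun_family X Y -> nat -> seq (X * Y) -> Prop :=
| amb_force0 (V : fun_family X Y) (acc : seq (X * Y)) : amb_force r V 0 acc
| amb_force_input (V : fun_family X Y) (m : nat) (acc : seq (X * Y)) :
    size acc < r ->
    (exists x : X, forall y : Y, amb_force r V m (rcons acc (x, y))) ->
    amb_force r V m acc
| amb_force_yes (V : fun_family X Y) (m : nat) (acc : seq (X * Y)) :
    size acc = r ->
    (exists f, V f /\ all_correct f acc) ->
    amb_force r (fun f => V f /\ all_correct f acc) m [::] ->
    amb_force r V m acc
| amb_force_no (V : fun_family X Y) (m : nat) (acc : seq (X * Y)) :
    size acc = r ->
    (exists f, V f /\ ~~ all_correct f acc) ->
    amb_force r (fun f => V f /\ ~~ all_correct f acc) m [::] ->
    amb_force r V m.+1 acc.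

Definition opt_amb {X : Type} {Y : eqType} (r : nat) (F : fun_family X Y) (n : nat) : Prop :=
  amb_force r F n [::] /\ forall m, amb_force r F m [::] -> m <= n.

(* Main.v *)
Require Import Defs.
From Stdlib Require Import Reals.
From mathcomp Require Import all_boot.
From Stdlib Require Import Lra Lia ClassicalEpsilon Classical.
From mathcomp Require Import zify.
Set Implicit Arguments.
Unset Strict Implicit.

Lemma std_mono (X : Type) (Y : eqType) : forall (S : fun_family X Y) m, std_force S m ->
  forall T : fun_family X Y, (forall f, S f -> T f) -> std_force T m.
Proof.
fix IH 3. intros S m H T hs. destruct H as [V|V m' [x g]].
- constructor.
- apply std_force_step. exists x. intro y. destruct (g y) as [v [[f [hf hfx]] hrec]].
  exists v. split. + exists f. split; auto.
  + apply (IH _ _ hrec). intros f' [h1 h2]. split; auto.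
Qed.

Lemma std_down (X : Type) (Y : eqType) : forall (S : fun_family X Y) m, std_force S m ->
  forall m', m' <= m -> std_force S m'.
Proof.
fix IH 3. intros S m H m' hm. destruct H as [V|V m0 [x g]].
- have -> : m' = 0 by lia. constructor.
- destruct m' as [|m']. constructor. apply std_force_step. exists x. intro y.
  destruct (g y) as [v [hv hrec]]. exists v. split; auto.
  apply (IH _ _ hrec). case: (v == y) => /=; lia.
Qed.

Section Game.
Variables (r k : nat) (X : Type) (F : fun_family X 'I_k) (ns : nat).
Hypothesis Hopt : opt_std F ns.
Variable y0 : 'I_k.
Local Notation Y := 'I_k.
Local Notation FF := (fun_family X Y).

Definition sub (S T : FF) := forall f, S f -> T f.
Definition restr (S : FF) x v : FF := fun f => S f /\ f x = v.
Definition nonempty (S : FF) := exists f, S f.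

Fixpoint dfind (S : FF) n := match n with 0 => 0 | n'.+1 =>
  if excluded_middle_informative (std_force S n'.+1) then n'.+1 else dfind S n' end.
Definition dd S := dfind S ns.

Lemma dfind_force S n : std_force S (dfind S n).
Proof. elim: n => [|n IH] /=; first by constructor.
by destruct (excluded_middle_informative _). Qed.

Lemma dfind_le S n : dfind S n <= n.
Proof. elim: n => [|n IH] //=. destruct (excluded_middle_informative _) => //. by apply: leqW. Qed.

Lemma dfind_max S n m : m <= n -> std_force S m -> m <= dfind S n.
Proof. elim: n => [|n IH] /= hm hs; first by lia.
destruct (excluded_middle_informative _) as [hn|hn] => //.
have : m != n.+1 by apply/eqP => e; subst.
move=> ne; apply: IH => //; lia. Qed.

Lemma dd_force S : std_force S (dd S).
Proof. exact: dfind_force. Qed.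

Lemma dd_le S : dd S <= ns.
Proof. exact: dfind_le. Qed.

Lemma dd_max S m : sub S F -> std_force S m -> m <= dd S.
Proof. move=> hs hf. apply: dfind_max => //. apply: (proj2 Hopt). exact: std_mono hf _ hs. Qed.

Lemma dd_mono S T : sub S T -> sub T F -> dd S <= dd T.
Proof. move=> hST hTF. apply: dd_max => //. exact: std_mono (dd_force S) _ hST. Qed.

Lemma two_label S x v1 v2 E : v1 != v2 -> nonempty (restr S x v1) -> nonempty (restr S x v2) ->
  std_force (restr S x v1) E -> std_force (restr S x v2) E -> std_force S E.+1.
Proof.
move=> ne [f1 h1] [f2 h2] s1 s2. apply: std_force_step. exists x => y.
case e: (v1 == y).
- exists v2. have -> : (v2 == y) = false.
    by move/eqP: e => <-; apply/negbTE; rewrite eq_sym.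
  split => //. by exists f2.
- exists v1. rewrite e. split => //. by exists f1.
Qed.

Definition good (S : FF) x p := forall v, nonempty (restr S x v) ->
  nonempty (restr S x p) /\ dd (restr S x v) <= dd (restr S x p).

Lemma good_ex S x : exists p, good S x p.
Proof.
pose score v := if excluded_middle_informative (nonempty (restr S x v)) then (dd (restr S x v)).+1 else 0.
case: (@arg_maxnP _ y0 xpredT score isT) => p _ Hmax.
exists p => v hv. have := Hmax v isT. rewrite /score.
destruct (excluded_middle_informative (nonempty (restr S x v))) as [h1|h1]; last by [].
destruct (excluded_middle_informative (nonempty (restr S x p))) as [hp|hp]; last by [].
move=> h; split => //; lia.
Qed.

Definition soa S x : Y := proj1_sig (constructive_indefinite_description _ (good_ex S x)).
Lemma soa_good S x : good S x (soa S x).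
Proof. rewrite /soa. by case: constructive_indefinite_description. Qed.

Lemma drop S x v : sub S F -> v != soa S x -> nonempty (restr S x v) ->
  (dd (restr S x v)).+1 <= dd S.
Proof.
move=> hS ne hv. have [hp hle] := soa_good hv.
apply: dd_max => //. apply: (two_label ne hv hp (dd_force _)).
exact: std_down (dd_force _) _ hle.
Qed.


Lemma In_mem (T : eqType) (s : seq T) x : x \in s -> List.In x s.
Proof. elim: s => [|y s IH] //=. rewrite in_cons => /orP [/eqP ->|h]; [by left|by right; apply: IH]. Qed.

Fixpoint mt (S : FF) (acc : seq (X * Y)) : Prop :=
  match acc with [::] => True | p :: t => soa S p.1 = p.2 /\ mt (restr S p.1 p.2) t end.
Fixpoint rest (S : FF) (acc : seq (X * Y)) : FF :=
  match acc with [::] => S | p :: t => rest (restr S p.1 p.2) t end.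

Lemma mt_rcons S acc x y : mt S (rcons acc (x, y)) <-> mt S acc /\ soa (rest S acc) x = y.
Proof. elim: acc S => [|p t IH] S /=. - tauto. - have := IH (restr S p.1 p.2). tauto. Qed.

Lemma sub_restr S x v : sub (restr S x v) S.
Proof. by move=> f []. Qed.
Lemma sub_trans S T U : sub S T -> sub T U -> sub S U.
Proof. move=> h1 h2 f h; exact: h2 (h1 f h). Qed.

Definition keep (S : FF) : seq FF := if excluded_middle_informative (nonempty S) then [:: S] else [::].

Fixpoint children (S : FF) (acc : seq (X * Y)) : seq FF :=
  match acc with [::] => [::] | p :: t =>
    List.app (List.flat_map (fun v => if v == p.2 then [::] else keep (restr S p.1 v)) (enum 'I_k))
      (children (restr S p.1 p.2) t) end.

Lemma children_sub S acc C : List.In C (children S acc) -> sub C S.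
Proof.
elim: acc S => [|p t IH] S //=. move/List.in_app_iff => [|h].
- move/List.in_flat_map => [v [_ ]]. case: (v == p.2) => //. rewrite /keep.
  destruct (excluded_middle_informative _) => //= [[<-|//]]. exact: sub_restr.
- move=> f hf. by case: (IH _ h f hf).
Qed.

Lemma children_cover S acc f : S f -> ~~ all_correct f acc -> exists C, List.In C (children S acc) /\ C f.
Proof.
elim: acc S => [|p t IH] S //= hS. rewrite /all_correct /=.
case e: (f p.1 == p.2) => /= h.
- have [C [h1 h2]] := IH (restr S p.1 p.2) (conj hS (eqP e)) h.
  exists C; split => //. apply/List.in_app_iff; by right.
- exists (restr S p.1 (f p.1)). split; last by []. apply/List.in_app_iff; left.
  apply/List.in_flat_map. exists (f p.1). split; first by apply: In_mem; rewrite mem_enum.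
  rewrite e /keep. destruct (excluded_middle_informative _) as [hne|hn]; first by left.
  by exfalso; apply: hn; exists f.
Qed.

Open Scope R_scope.
Variable a : R.
Hypothesis Ha : 1 <= a.

Definition w (S : FF) : R := a ^ dd S.
Fixpoint Phi (L : seq FF) : R := match L with [::] => 0 | S0 :: L' => w S0 + Phi L' end.

Lemma Phi_app L1 L2 : Phi (List.app L1 L2) = Phi L1 + Phi L2.
Proof. elim: L1 => [|S L IH] /=; [lra | rewrite IH; lra]. Qed.

Lemma w_ge1 S : 1 <= w S.
Proof. exact: pow_R1_Rle. Qed.

Lemma Phi_ge0 L : 0 <= Phi L.
Proof. elim: L => [|S L IH] /=; [lra | have := w_ge1 S; lra]. Qed.

Lemma Phi_In S L : List.In S L -> w S <= Phi L.
Proof. elim: L => [|T L IH] //= [->|h]; [have := Phi_ge0 L; lra | have := IH h; have := w_ge1 T; lra]. Qed.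

Lemma w_mono S T : sub S T -> sub T F -> w S <= w T.
Proof. move=> h1 h2. apply: Rle_pow => //. apply/leP. exact: dd_mono. Qed.

Lemma w_drop S x v : sub S F -> v != soa S x -> nonempty (restr S x v) -> w (restr S x v) * a <= w S.
Proof.
move=> hS ne hv. have := drop hS ne hv => h. rewrite /w Rmult_comm.
have -> : a * a ^ dd (restr S x v) = a ^ (dd (restr S x v)).+1 by [].
apply: Rle_pow => //. by apply/leP.
Qed.

Lemma children_bound S acc : sub S F -> mt S acc ->
  Phi (children S acc) * a <= INR (size acc) * INR k * w S.
Proof.
elim: acc S => [|p t IH] S hS /=.
- move=> _. have := w_ge1 S. nra.
- move=> [hsoa hmt]. rewrite Phi_app.
  have h1 : forall l : seq Y, Phi (List.flat_map (fun v : Y => if v == p.2 then [::] else keep (restr S p.1 v)) l) * a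
     <= INR (size l) * w S.
  { elim => [|v l IHl]. - rewrite /=. have := w_ge1 S. nra.
    have -> : INR (size (v :: l)) = INR (size l) + 1 by rewrite -S_INR.
    rewrite [List.flat_map _ (v :: l)]/= Phi_app Rmult_plus_distr_r.
    case ev: (v == p.2).
    - rewrite /=. have := w_ge1 S. lra.
    - rewrite {1}/keep. destruct (excluded_middle_informative _) as [hn|hn] => /=.
      + have := w_drop hS (x := p.1) (v := v). rewrite hsoa ev => /(_ isT hn). lra.
      + have := w_ge1 S. lra. }
  have := h1 (enum 'I_k). rewrite size_enum_ord => h1'.
  have hr : sub (restr S p.1 p.2) F := sub_trans (@sub_restr _ _ _) hS.
  have h2 := IH _ hr hmt.
  have h3 := w_mono (@sub_restr S p.1 p.2) hS.
  have := pos_INR k. have := pos_INR (size t). change (match size t with 0%N => 1 | _.+1 => INR (size t) + 1 end) with (INR (size t).+1). rewrite S_INR => ht hk.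
  have h4 : INR (size t) * INR k * w (restr S p.1 p.2) <= INR (size t) * INR k * w S by apply: Rmult_le_compat_l => //; nra.
  lra.
Qed.

Definition mtb S acc : bool := if excluded_middle_informative (mt S acc) then true else false.
Lemma mtbP S acc : mtb S acc = true <-> mt S acc.
Proof. rewrite /mtb. by destruct (excluded_middle_informative _). Qed.

Fixpoint Wt (L : seq FF) acc : R :=
  match L with [::] => 0 | S0 :: L' => (if mtb S0 acc then w S0 else 0) + Wt L' acc end.

Lemma Wt_nil L : Wt L [::] = Phi L.
Proof. elim: L => [|S L IH] //=. have -> : mtb S [::] = true by apply/mtbP. by rewrite IH. Qed.

Fixpoint sumL (l : seq Y) (g : Y -> R) : R := match l with [::] => 0 | y :: l' => g y + sumL l' g end.

Lemma sumL_add l g h : sumL l (fun y => g y + h y) = sumL l g + sumL l h.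
Proof. elim: l => [|y l IH] /=; [lra | rewrite IH; lra]. Qed.

Lemma sumL_ge0 l g : (forall z, 0 <= g z) -> 0 <= sumL l g.
Proof. move=> h; elim: l => [|y l IH] /=; [lra | have := h y; lra]. Qed.

Lemma sumL_ge l g y : List.In y l -> (forall z, 0 <= g z) -> g y <= sumL l g.
Proof.
move=> hy h; elim: l hy => [|z l IH] //= [->|hy].
- have := sumL_ge0 l h; lra.
- have := IH hy; have := h z; lra.
Qed.

Lemma sumL_le l g M : (forall z, List.In z l -> g z <= M) -> sumL l g <= INR (size l) * M.
Proof.
elim: l => [|y l IH] h. - rewrite /=. lra.
have -> : INR (size (y :: l)) = INR (size l) + 1 by rewrite -S_INR.
rewrite [sumL _ _]/=. have := h y (or_introl erefl). have := IH (fun z hz => h z (or_intror hz)). lra.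
Qed.

Lemma max_ex (l : seq Y) g : l <> [::] -> exists y, List.In y l /\ forall z, List.In z l -> g z <= g y.
Proof.
elim: l => [|y l IH] // _. case: l IH => [|y' l'] IH.
- exists y. split; first by left. move=> z [<-|//]; lra.
- have [m [hm hmax]] := IH ltac:(discriminate).
  destruct (Rle_dec (g y) (g m)) as [hle|hlt].
  + exists m. split; first by right. move=> z [<-|hz] //. exact: hmax.
  + exists y. split; first by left. move=> z [<-|hz]; first lra. have := hmax z hz. lra.
Qed.

Lemma Wt_ge0 L acc : 0 <= Wt L acc.
Proof. elim: L => [|S L IH] /=; first lra. case: (mtb S acc); have := w_ge1 S; lra. Qed.

Lemma Wt_split L acc x : Wt L acc <= sumL (enum 'I_k) (fun y => Wt L (rcons acc (x, y))).
Proof.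
elim: L => [|S L IH] /=.
- apply: sumL_ge0 => z; lra.
- rewrite sumL_add.
  have hg : forall z, 0 <= (if mtb S (rcons acc (x, z)) then w S else 0).
    move=> z; case: (mtb _ _); have := w_ge1 S; lra.
  suff : (if mtb S acc then w S else 0) <= sumL (enum 'I_k) (fun y => if mtb S (rcons acc (x, y)) then w S else 0) by lra.
  case e: (mtb S acc).
  + have := @sumL_ge (enum 'I_k) (fun y => if mtb S (rcons acc (x, y)) then w S else 0) (soa (rest S acc) x).
    have -> : mtb S (rcons acc (x, soa (rest S acc) x)) = true.
      apply/mtbP/mt_rcons. split => //. by apply/mtbP.
    move=> h; apply: h => //. apply: In_mem. by rewrite mem_enum.
  + exact: sumL_ge0.
Qed.

Lemma greedy L acc x : exists y, Wt L acc <= INR k * Wt L (rcons acc (x, y)).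
Proof.
have hne : enum 'I_k <> [::].
  move=> e. have : y0 \in enum 'I_k by rewrite mem_enum. by rewrite e.
have [y [_ hy]] := max_ex (fun y => Wt L (rcons acc (x, y))) hne.
exists y. have := Wt_split L acc x. have := sumL_le hy. rewrite size_enum_ord. lra.
Qed.

Definition negS (S : FF) acc : FF := fun f => S f /\ ~~ all_correct f acc.
Definition posS (S : FF) acc : FF := fun f => S f /\ all_correct f acc.

Definition Lno (L : seq FF) acc : seq FF :=
  List.flat_map (fun S => if mtb S acc then children S acc else [:: negS S acc]) L.
Definition Lyes (L : seq FF) acc : seq FF := List.map (fun S => posS S acc) L.

Lemma Lno_bound L acc : (forall S, List.In S L -> sub S F) -> size acc = r ->
  a * Phi (Lno L acc) <= a * Phi L - (a - INR r * INR k) * Wt L acc.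
Proof.
move=> hL hr. elim: L hL => [|S L IH] hL. - rewrite /=. lra.
rewrite /Lno [List.flat_map _ _]/= -/(Lno L acc) Phi_app [Phi (S :: L)]/= [Wt (S :: L) acc]/=.
have := IH (fun T hT => hL T (or_intror hT)).
have hS := hL S (or_introl erefl).
case e: (mtb S acc).
- have := children_bound hS (proj1 (mtbP S acc) e). rewrite hr. lra.
- rewrite /=. have : w (negS S acc) <= w S.
    apply: w_mono => //. by move=> f [].
  have := Ha. nra.
Qed.

Lemma Lno_sub L acc : (forall S, List.In S L -> sub S F) -> forall C, List.In C (Lno L acc) -> sub C F.
Proof.
move=> hL C /List.in_flat_map [S [hS]]. case: (mtb S acc).
- move/children_sub => h. exact: sub_trans h (hL S hS).
- move=> [<-|//]. move=> f [hf _]. exact: hL S hS f hf.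
Qed.

Lemma Lno_cover (V : FF) L acc : (forall f, V f -> exists S, List.In S L /\ S f) ->
  forall f, V f /\ ~~ all_correct f acc -> exists C, List.In C (Lno L acc) /\ C f.
Proof.
move=> hc f [hV hn]. have [S [hS hSf]] := hc f hV.
case e: (mtb S acc).
- have [C [h1 h2]] := children_cover hSf hn. exists C; split => //.
  apply/List.in_flat_map. exists S; split => //. by rewrite e.
- exists (negS S acc). split; last by []. apply/List.in_flat_map. exists S; split => //. rewrite e. by left.
Qed.

Lemma Lyes_bound L acc : (forall S, List.In S L -> sub S F) -> Phi (Lyes L acc) <= Phi L.
Proof.
elim: L => [|S L IH] hL /=; first lra.
have := IH (fun T hT => hL T (or_intror hT)).
have : w (posS S acc) <= w S by apply: w_mono; [by move=> f [] | exact: hL S (or_introl erefl)].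
lra.
Qed.

Lemma Lyes_sub L acc : (forall S, List.In S L -> sub S F) -> forall C, List.In C (Lyes L acc) -> sub C F.
Proof. move=> hL C /List.in_map_iff [S [<- hS]] f [hf _]. exact: hL S hS f hf. Qed.

Lemma Lyes_cover (V : FF) L acc : (forall f, V f -> exists S, List.In S L /\ S f) ->
  forall f, V f /\ all_correct f acc -> exists C, List.In C (Lyes L acc) /\ C f.
Proof.
move=> hc f [hV hn]. have [S [hS hSf]] := hc f hV.
exists (posS S acc). split; last by []. apply/List.in_map_iff. by exists S.
Qed.


Hypothesis Hrk : INR r * INR k <= a.
Definition q := 1 - (a - INR r * INR k) / (a * INR k ^ r).

Lemma k_pos : 0 < INR k.
Proof. apply: lt_0_INR. case: y0 => m hm /=. apply/ltP. lia. Qed.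

Lemma K_ge1 : 1 <= INR k ^ r.
Proof. apply: pow_R1_Rle. have : (0 < k)%N by case: y0 => m hm; lia.
move=> h. have := lt_0_INR k (ltP h). have : INR k = INR (k.-1) + 1 by rewrite -S_INR; f_equal; lia.
have := pos_INR k.-1. lra. Qed.

Lemma q_ge0 : 0 <= q.
Proof.
rewrite /q. have hK := K_ge1. have ha : 0 < a * INR k ^ r by nra.
have hu : (a * INR k ^ r) * / (a * INR k ^ r) = 1 by field; lra.
have hu0 : 0 < / (a * INR k ^ r) by apply: Rinv_0_lt_compat.
have hrk0 : 0 <= INR r * INR k by have := pos_INR r; have := pos_INR k; nra.
rewrite /Rdiv.
have : (a - INR r * INR k) * / (a * INR k ^ r) <= (a * INR k ^ r) * / (a * INR k ^ r).
  apply: Rmult_le_compat_r; nra.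
lra.
Qed.

Lemma Lno_q L acc : (forall S, List.In S L -> sub S F) -> size acc = r ->
  Phi L <= INR k ^ r * Wt L acc -> Phi (Lno L acc) <= q * Phi L.
Proof.
move=> hL hr hg. have hb := Lno_bound hL hr.
have hK := K_ge1. have ha0 : 0 < a by lra.
set c := (a - INR r * INR k) / (a * INR k ^ r).
have hc : c * (a * INR k ^ r) = a - INR r * INR k by rewrite /c; field; split; lra.
have hc0 : 0 <= c.
  rewrite /c /Rdiv. apply: Rmult_le_pos; first lra. left. apply: Rinv_0_lt_compat. nra.
have h1 : a * c * Phi L <= (a - INR r * INR k) * Wt L acc.
  rewrite -hc. have -> : c * (a * INR k ^ r) * Wt L acc = (a * c) * (INR k ^ r * Wt L acc) by ring.
  apply: Rmult_le_compat_l => //. nra.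
apply: (Rmult_le_reg_l a) => //.
have -> : a * (q * Phi L) = a * Phi L - a * c * Phi L by rewrite /q -/c; ring.
lra.
Qed.

Lemma main_inv : forall V m acc, amb_force r V m acc -> forall L,
  (forall S, List.In S L -> sub S F) -> (forall f, V f -> exists S, List.In S L /\ S f) ->
  Phi L <= INR k ^ size acc * Wt L acc -> m = 0%N \/ 1 <= q ^ m * Phi L.
Proof.
fix IH 4. move=> V m acc H L hsub hcov hgr.
destruct H as [V acc|V m acc hs [x g]|V m acc hsz hex hrec|V m acc hsz [f0 [hf0 hn0]] hrec].
- by left.
- have [y hy] := greedy L acc x. apply: (IH _ _ _ (g y) L hsub hcov).
  rewrite size_rcons /=. have := pow_le (INR k) (size acc) (pos_INR k).
  have := Wt_ge0 L acc. have := Wt_ge0 L (rcons acc (x, y)).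
  move=> h1 h2 h3.
  have : INR k ^ size acc * Wt L acc <= INR k ^ size acc * (INR k * Wt L (rcons acc (x, y))).
    exact: Rmult_le_compat_l.
  move=> h4. have -> : INR k * INR k ^ size acc * Wt L (rcons acc (x, y)) = INR k ^ size acc * (INR k * Wt L (rcons acc (x, y))) by ring. lra.
- have := IH _ _ _ hrec (Lyes L acc) (Lyes_sub hsub) (Lyes_cover hcov).
  rewrite Wt_nil /=. move=> /(_ ltac:(lra)) [->|h]; first by left.
  right. have := Lyes_bound acc hsub. have := pow_le q m q_ge0. move=> h1 h2.
  have : q ^ m * Phi (Lyes L acc) <= q ^ m * Phi L by apply: Rmult_le_compat_l.
  lra.
- have [C [hC hCf]] := Lno_cover (acc:=acc) hcov (conj hf0 hn0).
  have hge : 1 <= Phi (Lno L acc).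
    have := Phi_In hC. have := w_ge1 C. lra.
  have h1 : 1 <= q ^ m * Phi (Lno L acc).
    have := IH _ _ _ hrec (Lno L acc) (Lno_sub hsub) (Lno_cover (acc:=acc) hcov).
    rewrite Wt_nil /=. move=> /(_ ltac:(lra)) [->|h] //=. lra.
  right. rewrite hsz in hgr. have h2 := Lno_q hsub hsz hgr.
  have := pow_le q m q_ge0. move=> h3.
  have : q ^ m * Phi (Lno L acc) <= q ^ m * (q * Phi L) by apply: Rmult_le_compat_l.
  rewrite /=. move=> h4. have -> : q * q ^ m * Phi L = q ^ m * (q * Phi L) by ring.
  lra.
Qed.

Lemma final_bound na : amb_force r F na [::] -> na = 0%N \/ 1 <= q ^ na * a ^ ns.
Proof.
move=> H. have := main_inv H (L := [:: F]).
case.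
- by move=> S [<-|].
- move=> f hf. exists F. split => //. by left.
- rewrite Wt_nil /=. lra.
- by left.
- move=> h. right. have : w F <= a ^ ns by apply: Rle_pow => //; apply/leP; exact: dd_le.
  have := pow_le q na q_ge0. move: h. rewrite /=. move=> h h1 h2.
  have : q ^ na * w F <= q ^ na * a ^ ns by apply: Rmult_le_compat_l.
  lra.
Qed.

End Game.

Open Scope R_scope.

Lemma ln_le_sub1 z : 0 < z -> ln z <= z - 1.
Proof. move=> hz. have := exp_ineq1_le (ln z). rewrite exp_ln //. lra. Qed.

Lemma ln_ge0 z : 1 <= z -> 0 <= ln z.
Proof. move=> h. case: (Req_dec z 1) => [->|ne]; first by rewrite ln_1; lra.
rewrite -ln_1. left. apply: ln_increasing; lra. Qed.

Lemma ln_le_sqrt z : 0 < z -> ln z <= 2 * sqrt z.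
Proof.
move=> hz. have hs : 0 < sqrt z by apply: sqrt_lt_R0.
have : ln z = 2 * ln (sqrt z).
  rewrite -{1}(sqrt_sqrt z); last lra. rewrite ln_mult //. lra.
move=> ->. have := ln_le_sub1 hs. lra.
Qed.

Definition ttk (k : nat) : R := ln (INR k) + 2.
Definition aa (r k : nat) : R := INR r * INR k * ttk k.
Definition eps (r k : nat) : R :=
  if (k < 2)%N then 0 else ln (aa r k) * ttk k / ((ttk k - 1) * ln (INR k)) - 1.

Lemma lnk_pos k : (2 <= k)%N -> 0 < ln (INR k).
Proof. move=> hk. rewrite -ln_1. apply: ln_increasing; first lra.
apply: lt_1_INR. apply/ltP. lia. Qed.

Lemma eps_form r k : (1 <= r)%N -> (2 <= k)%N ->
  let u := ln (INR k) in let B := ln (INR r) + ln (u + 2) in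
  eps r k * ((u + 1) * u) = B * (u + 2) + u.
Proof.
move=> hr hk u B. have hu := lnk_pos hk. rewrite /eps.
have -> : (k < 2)%N = false by lia.
have hr0 : 0 < INR r by apply: lt_0_INR; apply/ltP; lia.
have hk0 : 0 < INR k by apply: lt_0_INR; apply/ltP; lia.
rewrite /aa /ttk -/u. rewrite !ln_mult //; try nra; try lra.
- rewrite /B /u. field. split; lra.
- rewrite /u; lra.
Qed.

Lemma eps_cv r : (1 <= r)%N -> Un_cv (eps r) 0.
Proof.
move=> hr e he.
have hr1 : 1 <= INR r by rewrite -INR_1; apply: le_INR; apply/leP.
have hlr := ln_ge0 hr1.
set c := 3 * ln (INR r) + 1.
have hc : 1 <= c by rewrite /c; lra.
set M := (2 * (c + 6) / e) ^ 2 + 4.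
have [N hN] := INR_archimed 1 (exp M) ltac:(lra).
exists N => n hn.
have hnN : INR N <= INR n by apply: le_INR.
have hexpM : exp M < INR n by lra.
have hM4 : 4 <= M by rewrite /M; have := pow2_ge_0 (2 * (c + 6) / e); lra.
have hn2 : (2 <= n)%N.
  have := exp_ineq1_le M. move=> h.
  case: n hn hnN hexpM => [|[|n]] // _ _; rewrite ?INR_0 ?INR_1; lra.
have hu := lnk_pos hn2. set u := ln (INR n) in hu.
have huM : M < u.
  rewrite /u -(ln_exp M). apply: ln_increasing => //. exact: exp_pos.
have hform := eps_form hr hn2. cbv zeta in hform. rewrite -/u in hform.
set B := ln (INR r) + ln (u + 2) in hform.
have hB0 : 0 <= ln (u + 2) by apply: ln_ge0; lra.
have hs := ln_le_sqrt (z := u + 2) ltac:(lra).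
set s := sqrt (u + 2) in hs.
have hss : s * s = u + 2 by rewrite /s sqrt_sqrt; lra.
have hs0 : 0 <= s by apply: sqrt_pos.
have hZ : 2 * (c + 6) / e < s.
  have hZ0 : 0 < 2 * (c + 6) / e by apply: Rdiv_lt_0_compat; lra.
  apply: Rnot_le_lt => hle.
  have : s * s <= (2 * (c + 6) / e) ^ 2 by rewrite /=; nra.
  rewrite /M in huM. lra.
have hes : 2 * (c + 6) < e * s.
  have := Rmult_lt_compat_l e _ _ he hZ. have -> : e * (2 * (c + 6) / e) = 2 * (c + 6) by field; lra. lra.
have hs2 : 2 <= s by nra.
have hE0 : 0 <= eps r n.
  have : 0 <= B * (u + 2) + u by rewrite /B; nra.
  rewrite -hform => h. have hp : 0 < (u + 1) * u by nra. nra.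
have hE : eps r n * (u + 1) <= 3 * B + 1.
  have h1 : B * (u + 2) + u <= (3 * B + 1) * u by rewrite /B; nra.
  rewrite -hform in h1. nra.
rewrite /R_dist Rminus_0_r Rabs_pos_eq //.
have : 3 * B + 1 < e * (u + 1).
  rewrite /B. have : e * s * s > 2 * (c + 6) * s by nra.
  rewrite /c in hes *. nra.
nra.
Qed.


Lemma amb_k1 r (X : Type) : forall (V : fun_family X 'I_1) m acc, amb_force r V m acc -> m = 0%N.
Proof.
fix IH 4. move=> V m acc H.
destruct H as [V acc|V m acc hs [x g]|V m acc hsz hex hrec|V m acc hsz [f0 [hf0 hn0]] hrec].
- by [].
- exact: (IH _ _ _ (g ord0)).
- exact: (IH _ _ _ hrec).
- exfalso. move/negP: hn0; apply. rewrite /all_correct. clear hsz hrec. elim: acc => //= p acc ->. by rewrite (ord1 (f0 p.1)) (ord1 p.2) eqxx.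
Qed.

Lemma std_k0 (X : Type) (F : fun_family X 'I_0) (x : X) m : std_force F m.
Proof. apply: std_force_step. exists x => y. case: y => i hi. lia. Qed.

Lemma amb_empty r (X : Type) (Y : eqType) (V : fun_family X Y) m : (1 <= r)%N -> ~ inhabited X ->
  amb_force r V m [::] -> m = 0%N.
Proof.
move=> hr hX H. inversion H; subst => //.
case: H1 => x _. by case: hX.
Qed.

Open Scope R_scope.
Unset Implicit Arguments.

Theorem mainTheorem8 (r : nat) (hr : (1 <= r)%N) :
  exists eps : nat -> R, Un_cv eps R0 /\
    forall (k : nat) (X : Type) (F : fun_family X 'I_k) (ns : nat),
      opt_std F ns ->
      forall na : nat, amb_force r F na [::] ->
        Rle (INR na)
          (Rmult (Rmult (Rmult (Rplus R1 (eps k)) (INR ns)) (pow (INR k) r)) (ln (INR k))).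
Proof.
exists (eps r). split; first exact: eps_cv.
move=> k X F ns Hopt na H.
have hr1 : 1 <= INR r by rewrite -INR_1; apply: le_INR; apply/leP.
case: (ltnP k 2) => hk.
- have hz : pow (INR k) r * ln (INR k) = 0.
    case: k F Hopt H hk => [|[|k]] F Hopt H hk //.
    + rewrite INR_0 pow_i; [ring | apply/ltP; lia].
    + rewrite INR_1 ln_1; ring.
  have -> : na = 0%N.
    case: k F Hopt H hk hz => [|[|k]] F Hopt H hk hz //.
    + destruct (classic (inhabited X)) as [[x]|hX].
      * exfalso. have := proj2 Hopt ns.+1 (std_k0 F x ns.+1). lia.
      * exact: amb_empty hr hX H.
    + exact: amb_k1 H.
  rewrite INR_0.
  have -> : (1 + eps r k) * INR ns * INR k ^ r * ln (INR k) = (1 + eps r k) * INR ns * (INR k ^ r * ln (INR k)) by ring.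
  rewrite hz. lra.
- have hk0 : (0 < k)%N by lia.
  pose y0 : 'I_k := Ordinal hk0.
  have hk2 : 2 <= INR k by have := le_INR 2 k (leP hk); rewrite /=; lra.
  have hu := lnk_pos hk. set u := ln (INR k) in hu *.
  set t := ttk k.
  have ht : t = u + 2 by [].
  set a := aa r k.
  have ha : a = INR r * INR k * t by [].
  have hrk0 : 2 <= INR r * INR k by nra.
  have Ha : 1 <= a by rewrite ha; nra.
  have Hrk : INR r * INR k <= a by rewrite ha; nra.
  have hK : INR k <= INR k ^ r.
    case: (r) hr => [|r'] // _. rewrite /=. have := pow_R1_Rle (INR k) r' ltac:(lra). nra.
  set K := INR k ^ r in hK *.
  have hla : 0 <= ln a by apply: ln_ge0.
  set la := ln a in hla *.
  have heps : 1 + eps r k = la * t / ((t - 1) * u).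
    rewrite /eps. have -> : (k < 2)%N = false by lia. rewrite -/u -/t -/a -/la. ring.
  rewrite heps.
  have hRHS : la * t / ((t - 1) * u) * INR ns * K * u = INR ns * K * (la * t / (t - 1)).
    field. split; lra.
  rewrite hRHS.
  have hns := pos_INR ns.
  have hpos : 0 <= la * t / (t - 1) by rewrite /Rdiv; apply: Rmult_le_pos; [nra | left; apply: Rinv_0_lt_compat; lra].
  case: (final_bound Hopt y0 Ha Hrk H) => [->|h].
  + rewrite INR_0. apply: Rmult_le_pos => //. nra.
  + set D := (a - INR r * INR k) / (a * K).
    have hq : q r k a = 1 - D by [].
    have hD : D * (a * K) = a - INR r * INR k by rewrite /D; field; nra.
    have hD0 : 0 < D.
      rewrite /D. apply: Rdiv_lt_0_compat; rewrite ha; nra.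
    have hDK : D * K <= 1.
      apply: (Rmult_le_reg_l a); first lra.
      have -> : a * (D * K) = D * (a * K) by ring. rewrite hD. nra.
    have hD1 : D <= 1 / 2 by nra.
    rewrite hq in h.
    have hq0 : 0 < 1 - D by lra.
    have := ln_ge0 h. rewrite ln_mult; [|exact: pow_lt|apply: pow_lt; lra].
    rewrite !ln_pow //; last lra. rewrite -/la.
    have := ln_le_sub1 hq0 => hl hl2.
    have hna := pos_INR na.
    have h1 : INR na * D <= INR ns * la by nra.
    have h2 : INR ns * K * (la * t / (t - 1)) * D = INR ns * la.
      rewrite /D ha. field. split; [nra|split; [nra|]]. lra.
    apply: (Rmult_le_reg_r D) => //. lra.
Qed.
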